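(* Let $(V, B)$ be a finite-dimensional real or complex symplectic vector space and let $P$ be a linear operator on $V$ that is self-adjoint with respect to $B$. Let $V = \bigoplus_\lambda V^\lambda$ be the decomposition of $V$ into generalized eigenspaces of $P$. Then a subspace $W \subset V$ is invariant under $\mathrm{Aut}(V, B, P)$ if and only if $W = \bigoplus_\lambda (W \cap V^\lambda)$ and each $W \cap V^\lambda$ is an invariant subspace of $(V^\lambda, B|_{V^\lambda}, P|_{V^\lambda})$.
   Context: $P$ self-adjoint with respect to $B$ means $B(Pu, v) = B(u, Pv)$ for all $u, v$. $\mathrm{Aut}(V, B, P)$ is the group of linear automorphisms of $V$ preserving $B$ and commuting with $P$ (equivalently, preserving both $B$ and the form $A(u,v) = B(Pu,v)$); a subspace is invariant if it is preserved by this group. The generalized eigenspace for an eigenvalue $\lambda$ is $\operatorname{Ker}(P - \lambda E)^N$ for $N$ sufficiently large. In the real case, generalized eigenspaces are taken either for real eigenvalues $\lambda$, or for pairs of complex conjugate eigenvalues $\alpha \pm i\beta$, in which case the generalized eigenspace is $\operatorname{Ker}(P^2 - 2\alpha P + (\alpha^2+\beta^2)E)^N$ for large $N$. *)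

(* Defs.v *)
From HB Require Import structures.
From mathcomp Require Import all_boot all_order all_algebra.
From mathcomp Require Import reals complex.
Set Implicit Arguments. Unset Strict Implicit. Unset Printing Implicit Defensive.
Import Order.TTheory GRing.Theory Num.Theory.
Local Open Scope ring_scope.

(* V = K^n as row vectors 'rV[K]_n; operators act on the right (u |-> u *m P);
   a bilinear form is B(u,v) = u *m B *m v^T (a 1x1 matrix);
   subspaces are row spaces of n x n matrices (mxalgebra). *)
Section Defs.
Variables (K : fieldType) (n : nat).
Implicit Types (B P g U W : 'M[K]_n) (u v : 'rV[K]_n).

Definition form B u v : 'M[K]_1 := u *m B *m v^T.

Definition symplectic B :=
  (forall u, form B u u = 0) /\
  (forall u, (forall v, form B u v = 0) -> u = 0).

Definition self_adjoint B P := forall u v, form B (u *m P) v = form B u (v *m P).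

(* g restricts to a linear automorphism of the subspace U that preserves
   B|_U and commutes with P|_U (U is assumed P-stable where used). *)
Definition aut_on U B P g :=
  [/\ (U *m g <= U)%MS, \rank (U *m g) = \rank U,
      (forall u v, (u <= U)%MS -> (v <= U)%MS ->
          form B (u *m g) (v *m g) = form B u v)
    & (forall u, (u <= U)%MS -> u *m P *m g = u *m g *m P)].

Definition invariant_in U B P W :=
  forall g, aut_on U B P g -> (W *m g <= W)%MS.

(* q(P) for a polynomial q (horner_mx needs n.+1, so written out) *)
(* generalized eigenspace attached to q = 'X - lambda or
   q = 'X^2 - 2 alpha 'X + (alpha^2 + beta^2):  Ker q(P)^n  (n = dim V
   is "sufficiently large"). *)
Definition poly_of_op P (q : {poly K}) : 'M[K]_n :=
  \sum_(i < size q) q`_i *: (P ^+ i).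
Definition gen_eigenspace P (q : {poly K}) : 'M[K]_n :=
  kermx (poly_of_op P q ^+ n).

(* The conclusion of the theorem, for a duplicate-free list qs of the
   polynomials indexing the generalized eigenspaces of P. *)
Definition invariant_decomp_statement B P (qs : seq {poly K}) :=
  forall W : 'M[K]_n,
    invariant_in 1%:M B P W <->
    [/\ (W == \sum_(q <- qs) (W :&: gen_eigenspace P q))%MS,
        (* directness of the sum *)
        \rank W = (\sum_(q <- qs) \rank (W :&: gen_eigenspace P q)%MS)%N
      & forall q, q \in qs ->
          invariant_in (gen_eigenspace P q) B P (W :&: gen_eigenspace P q)%MS].
End Defs.

Definition complex_eigpoly (R : rcfType) n (P : 'M[R[i]]_n) (q : {poly R[i]}) :=
  exists lambda, eigenvalue P lambda /\ q = 'X - lambda%:P.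

(* Real case: real eigenvalues lambda, or pairs of complex-conjugate
   (non-real) eigenvalues alpha +- i beta, i.e. roots of the
   characteristic polynomial. *)
Definition real_eigpoly (R : rcfType) n (P : 'M[R]_n) (q : {poly R}) :=
  (exists lambda, eigenvalue P lambda /\ q = 'X - lambda%:P) \/
  (exists alpha beta : R, 0 < beta /\
     root (map_poly (real_complex R) (char_poly P)) (Complex alpha beta) /\
     q = 'X^2 - (2 * alpha) *: 'X + (alpha ^+ 2 + beta ^+ 2)%:P).

(* Main.v *)
Require Import Defs.
From HB Require Import structures.
From mathcomp Require Import all_boot all_order all_algebra.
From mathcomp Require Import reals complex.
From mathcomp Require Import ring lra.
Set Implicit Arguments. Unset Strict Implicit. Unset Printing Implicit Defensive.
Import Order.TTheory GRing.Theory Num.Theory.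
Local Open Scope ring_scope.

Section Generic.
Variables (K : fieldType) (m : nat).
Local Notation n := m.+1.
Variables (B P : 'M[K]_n).
Hypothesis sa : self_adjoint B P.

Lemma mx_ext p (A C : 'M[K]_(n, p)) : (forall u : 'rV_n, u *m A = u *m C) -> A = C.
Proof. by move=> H; apply/row_matrixP => i; rewrite !rowE H. Qed.

Lemma PB : P *m B = B *m P^T.
Proof.
apply: mx_ext => u; apply: trmx_inj; apply: mx_ext => v.
have H := sa u v; rewrite /Defs.form trmx_mul !mulmxA in H.
by apply: trmx_inj; rewrite !trmx_mul !trmxK !mulmxA H.
Qed.

Local Notation Q := (horner_mx P).

Lemma hornerB p : Q p *m B = B *m (Q p)^T.
Proof.
elim/poly_ind: p => [|p c IH]; first by rewrite rmorph0 mul0mx trmx0 mulmx0.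
rewrite rmorphD rmorphM /= horner_mx_X horner_mx_C -!mulmxE.
rewrite mulmxDl linearD /= mulmxDr trmx_mul.
have cm : Q p *m P = P *m Q p by apply/comm_mx_sym/comm_mx_horner.
rewrite -mulmxA PB mulmxA IH -mulmxA -trmx_mul cm trmx_mul.
by rewrite mul_scalar_mx tr_scalar_mx mul_mx_scalar.
Qed.

Lemma form_horner p (u v : 'rV[K]_n) :
  Defs.form B (u *m Q p) v = Defs.form B u (v *m Q p).
Proof. by rewrite /Defs.form trmx_mul !mulmxA -(mulmxA u) hornerB !mulmxA. Qed.


Lemma formDl (x y v : 'rV[K]_n) : Defs.form B (x + y) v = Defs.form B x v + Defs.form B y v.
Proof. by rewrite /Defs.form !mulmxDl. Qed.
Lemma formDr (x y v : 'rV[K]_n) : Defs.form B v (x + y) = Defs.form B v x + Defs.form B v y.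
Proof. by rewrite /Defs.form linearD /= mulmxDr. Qed.
Lemma formN (x y : 'rV[K]_n) : Defs.form B (- x) (- y) = Defs.form B x y.
Proof. by rewrite /Defs.form linearN /= mulmxN !mulNmx opprK. Qed.
Lemma form0r (x : 'rV[K]_n) : Defs.form B x 0 = 0.
Proof. by rewrite /Defs.form trmx0 mulmx0. Qed.

Lemma orth p q (u v : 'rV[K]_n) : coprimep p q -> u *m Q p = 0 -> v *m Q q = 0 ->
  Defs.form B u v = 0.
Proof.
case/Bezout_eq1_coprimepP => [[a b] /= e] up vq.
have -> : u = u *m Q (p * a + b * q) by rewrite mulrC e rmorph1 mulmx1.
rewrite rmorphD /= mulmxDr !rmorphM /= -!mulmxE mulmxA up mul0mx add0r.
by rewrite mulmxA form_horner vq form0r.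
Qed.

Lemma QC p : Q p *m P = P *m Q p.
Proof. exact/comm_horner_mx/comm_mx_refl. Qed.

Variable qs : seq {poly K}.
Hypothesis Huniq : uniq qs.
Hypothesis Hcop : forall p q, p \in qs -> q \in qs -> p != q -> coprimep p q.
Hypothesis Hfull : Q (\prod_(q <- qs) q ^+ n) = 0.

Local Notation N := (size qs).
Definition qq (i : 'I_N) := qs`_i ^+ n.
Definition EE i := kermx (Q (qq i)).

Lemma poQ p : poly_of_op P p = Q p.
Proof.
rewrite /poly_of_op; transitivity (Q (\poly_(i < size p) p`_i)); last by rewrite coefK.
rewrite poly_def linear_sum; apply: eq_bigr => j _.
by rewrite linearZ /= rmorphXn /= horner_mx_X.
Qed.
Lemma gen_E (i : 'I_N) : gen_eigenspace P qs`_i = EE i.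
Proof. by rewrite /gen_eigenspace /EE /qq poQ rmorphXn. Qed.


Lemma cop_qq i j : i != j -> coprimep (qq i) (qq j).
Proof.
move=> ij; apply/coprimep_expl/coprimep_expr/Hcop; rewrite ?mem_nth //.
by rewrite nth_uniq.
Qed.

Lemma prod_qq : \prod_(i < N) qq i = \prod_(q <- qs) q ^+ n.
Proof. by rewrite (big_nth 0) big_mkord. Qed.

Definition RR i := \prod_(j < N | j != i) qq j.

Lemma prod_split i : \prod_(j < N) qq j = qq i * RR i.
Proof. by rewrite (bigD1 i). Qed.

Lemma cop_R i : coprimep (qq i) (RR i).
Proof.
rewrite /RR; apply: (big_ind (fun r => coprimep (qq i) r)).
- exact: coprimep1.
- by move=> x y cx cy; rewrite coprimepMr cx cy.
- by move=> j ji; apply: cop_qq; rewrite eq_sym.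
Qed.

Lemma Q0 i c : Q (c * (qq i * RR i)) = 0.
Proof. by rewrite -prod_split prod_qq rmorphM /= Hfull mulr0. Qed.

Lemma ex_bez i : exists u : {poly K} * {poly K}, u.1 * qq i + u.2 * RR i == 1.
Proof. by case/Bezout_eq1_coprimepP: (cop_R i) => u e; exists u; rewrite e. Qed.
Definition ab i := xchoose (ex_bez i).
Lemma ab_eq i : (ab i).1 * qq i + (ab i).2 * RR i = 1.
Proof. exact/eqP/(xchooseP (ex_bez i)). Qed.

Definition pi i := Q ((ab i).2 * RR i).
Definition FF i := kermx (Q (RR i)).

Lemma one_pi i : 1 - pi i = Q ((ab i).1 * qq i).
Proof. by rewrite /pi -(rmorph1 (horner_mx P)) -(ab_eq i) rmorphD /= addrK. Qed.

Lemma piE p (A : 'M_(p, n)) i : (A *m pi i <= EE i)%MS.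
Proof.
apply/sub_kermxP; rewrite -mulmxA mulmxE -rmorphM /= -mulrA (mulrC (RR i)).
by rewrite Q0 mulmx0.
Qed.

Lemma piF p (A : 'M_(p, n)) i : (A *m (1 - pi i) <= FF i)%MS.
Proof.
apply/sub_kermxP; rewrite one_pi -mulmxA mulmxE -rmorphM /= -mulrA Q0.
by rewrite mulmx0.
Qed.

Lemma pi_E p (A : 'M_(p, n)) i : (A <= EE i)%MS -> A *m pi i = A.
Proof.
move/sub_kermxP => AE; apply/eqP; rewrite eq_sym -subr_eq0 -{1}[A]mulmx1 -mulmxBr.
by rewrite one_pi mulrC rmorphM /= -mulmxE mulmxA AE mul0mx.
Qed.

Lemma pi_F p (A : 'M_(p, n)) i : (A <= FF i)%MS -> A *m pi i = 0.
Proof.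
by move/sub_kermxP => AF; rewrite /pi mulrC rmorphM /= -mulmxE mulmxA AF mul0mx.
Qed.

Lemma E_F i j : j != i -> (EE j <= FF i)%MS.
Proof.
move=> ji; apply/sub_kermxP; rewrite /RR (bigD1 j) //= rmorphM /= -mulmxE.
by rewrite mulmxA mulmx_ker mul0mx.
Qed.

Lemma orthEF i (x y : 'rV_n) : (x <= EE i)%MS -> (y <= FF i)%MS ->
  Defs.form B x y = 0 /\ Defs.form B y x = 0.
Proof.
move=> /sub_kermxP xE /sub_kermxP yF; split; first exact: orth (cop_R i) xE yF.
by apply: orth yF xE; rewrite coprimep_sym cop_R.
Qed.

Lemma form_split i (x1 x2 y1 y2 : 'rV_n) :
  (x1 <= EE i)%MS -> (y1 <= EE i)%MS -> (x2 <= FF i)%MS -> (y2 <= FF i)%MS ->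
  Defs.form B (x1 + x2) (y1 + y2) = Defs.form B x1 y1 + Defs.form B x2 y2.
Proof.
move=> x1E y1E x2F y2F.
rewrite !formDl !formDr (orthEF x1E y2F).1 (orthEF y1E x2F).2 addr0 add0r.
by [].
Qed.

Lemma u_split (u : 'rV_n) i : u = u *m pi i + u *m (1 - pi i).
Proof. by rewrite mulmxBr mulmx1 addrC subrK. Qed.

Lemma sumE : (\sum_(i < N) EE i :=: 1%:M)%MS.
Proof.
have H : {in predT &, forall i j : 'I_N, j != i -> coprimep (qq i) (qq j)}.
  by move=> i j _ _ ji; apply: cop_qq; rewrite eq_sym.
apply: eqmx_trans (eqmx_sym (@kermxpoly_prod K n P 'I_N predT qq H)) _.
rewrite /kermxpoly prod_qq Hfull; exact: kermx0.
Qed.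

Lemma dirE : mxdirect (\sum_(i < N) EE i).
Proof.
have := @mxdirect_sum_kermx K n P 'I_N predT qq; apply.
by move=> i j _ _ ji; apply: cop_qq; rewrite eq_sym.
Qed.

Lemma EF1 i : (1%:M <= EE i + FF i)%MS.
Proof.
rewrite -(@kermxpolyM K n P _ _ (cop_R i)) /kermxpoly.
have := Q0 i 1; rewrite mul1r => ->; by rewrite kermx0.
Qed.


Definition sg i := Q (1 - ((ab i).2 * RR i) *+ 2).
Lemma sgE i : sg i = (1 - pi i) - pi i.
Proof. by rewrite /sg rmorphB rmorph1 rmorphMn /= mulr2n opprD addrA. Qed.

Lemma pipi i : pi i *m pi i = pi i.
Proof. by apply: mx_ext => u; rewrite mulmxA pi_E // piE. Qed.

Lemma one_pi_pi i : (1 - pi i) *m pi i = 0.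
Proof. by rewrite mulmxBl mul1mx pipi subrr. Qed.

Lemma pi_one_pi i : pi i *m (1 - pi i) = 0.
Proof. by rewrite mulmxBr mulmx1 pipi subrr. Qed.

Lemma one_pi2 i : (1 - pi i) *m (1 - pi i) = 1 - pi i.
Proof. by rewrite mulmxBr mulmx1 one_pi_pi subr0. Qed.

Lemma sgsg i : sg i *m sg i = 1%:M.
Proof.
rewrite sgE; move: (one_pi2 i) (one_pi_pi i) (pi_one_pi i) (pipi i).
set a := 1 - pi i; set b := pi i => e1 e2 e3 e4.
rewrite mulmxBl (mulmxBr a a b) (mulmxBr b a b) e1 e2 e3 e4 subr0 sub0r opprK subrK /a.
by [].
Qed.

Lemma QCm p : P *m Q p = Q p *m P.
Proof. by rewrite QC. Qed.

Lemma aut_sg i : aut_on 1%:M B P (sg i).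
Proof.
split.
- exact: submx1.
- by rewrite mul1mx mxrank1 mxrank_unit // (mulmx1_unit (sgsg i)).1.
- move=> u v _ _.
  have e w : w *m sg i = - (w *m pi i) + w *m (1 - pi i).
    by rewrite sgE (mulmxBr w (1 - pi i) (pi i)) addrC.
  rewrite !e [in RHS](u_split u i) [in RHS](u_split v i).
  rewrite (@form_split i) ?piF ?eqmx_opp ?piE // formN.
  by rewrite -(@form_split i) ?piE ?piF.
- by move=> u _; rewrite -!mulmxA /sg QCm.
Qed.

Hypothesis two : (2%:R : K) != 0.

Lemma W_pi W i : invariant_in 1%:M B P W -> (W *m pi i <= W)%MS.
Proof.
move=> HW; have Wsg := HW _ (aut_sg i).
have e : pi i = (2%:R)^-1 *: (1 - sg i).
  have e2 : 1 - sg i = pi i *+ 2.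
    by rewrite /sg rmorphB rmorph1 rmorphMn opprB addrC subrK.
  by rewrite e2 -scaler_nat scalerA mulVf // scale1r.
rewrite e -scalemxAr scalemx_sub // mulmxBr mulmx1 addmx_sub //.
by rewrite eqmx_opp.
Qed.

Lemma sum_pi : \sum_(i < N) pi i = 1%:M.
Proof.
apply: mx_ext => u; rewrite mulmx1 mulmx_sumr.
have : (u <= \sum_(i < N) EE i)%MS by rewrite sumE submx1.
case/sub_sumsmxP => w ->; apply: eq_bigr => i _.
rewrite mulmx_suml (bigD1 i) //= pi_E ?submxMl // big1 ?addr0 // => j ji.
by apply: pi_F; apply: submx_trans (submxMl _ _) (E_F ji).
Qed.

Lemma g'_E i g p (A : 'M_(p, n)) : (A <= EE i)%MS ->
  A *m (pi i *m g + (1 - pi i)) = A *m g.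
Proof.
by move=> AE; rewrite mulmxDr mulmxA pi_E // mulmxBr mulmx1 pi_E // subrr addr0.
Qed.

Lemma g'_F i g p (A : 'M_(p, n)) : (A <= FF i)%MS ->
  A *m (pi i *m g + (1 - pi i)) = A.
Proof.
by move=> AF; rewrite mulmxDr mulmxA pi_F // mul0mx add0r mulmxBr mulmx1 pi_F // subr0.
Qed.

Lemma aut_ext i g : aut_on (EE i) B P g -> aut_on 1%:M B P (pi i *m g + (1 - pi i)).
Proof.
case=> gE grk gform gcomm.
have e u : u *m (pi i *m g + (1 - pi i)) = (u *m pi i) *m g + u *m (1 - pi i).
  by rewrite mulmxDr mulmxA.
have uE u : ((u *m pi i) *m g <= EE i)%MS.
  exact: submx_trans (submxMr g (piE u i)) gE.
split.
- exact: submx1.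
- rewrite mul1mx mxrank1; apply/eqP; rewrite -[_ == _]/(row_full _) -sub1mx.
  apply: submx_trans (EF1 i) _; rewrite addsmx_sub; apply/andP; split.
    have := (mxrank_leqif_sup gE).2; rewrite grk eqxx => /esym EEg.
    apply: submx_trans EEg _; rewrite -(g'_E g (submx_refl (EE i))).
    exact: submxMl.
  have := submxMl (FF i) (pi i *m g + (1 - pi i)).
  by rewrite g'_F.
- move=> u v _ _; rewrite !e (@form_split i) ?uE ?piF // gform ?piE //.
  by rewrite -(@form_split i) ?piE ?piF // -!u_split.
- move=> u _; rewrite !e mulmxDl.
  have c1 : P *m pi i = pi i *m P by rewrite QCm.
  have c2 : P *m (1 - pi i) = (1 - pi i) *m P by rewrite one_pi QCm.
  by rewrite -!(mulmxA u P) c1 c2 !mulmxA gcomm ?piE.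
Qed.

Theorem generic : invariant_decomp_statement B P qs.
Proof.
move=> W.
rewrite (big_nth 0) big_mkord [X in (_ = X)%N](big_nth 0) big_mkord.
under eq_bigr => i _ do rewrite gen_E.
under [X in (_ = X)%N]eq_bigr => i _ do rewrite gen_E.
set S := (\sum_(i < N) (W :&: EE i))%MS.
split.
- move=> HW.
  have WS : (W <= S)%MS.
    rewrite -[W]mulmx1 -sum_pi mulmx_sumr; apply: summx_sub_sums => i _.
    by rewrite sub_capmx piE andbT; apply: W_pi.
  have SW : (S <= W)%MS by apply/sumsmx_subP => i _; apply: capmxSl.
  have dS : mxdirect S.
    apply/mxdirect_sumsP => i _; apply/eqP; rewrite -submx0.
    have H0 := mxdirect_sumsP dirE i isT.
    apply: (submx_trans (_ : _ <= EE i :&: \sum_(j | true && (j != i)) EE j)%MS).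
      apply: capmxS; first exact: capmxSr.
      by apply: sumsmxS => j _; apply: capmxSr.
    by rewrite H0.
  split.
  + by rewrite WS SW.
  + have WeS : (W == S)%MS by rewrite WS SW.
    by rewrite (eqmx_rank WeS) (mxdirectP dS).
  + move=> q qin.
    have [i ->] : exists i : 'I_N, q = qs`_i.
      have lt : (index q qs < N)%N by rewrite index_mem.
      by exists (Ordinal lt); rewrite /= nth_index.
    rewrite gen_E => g Hg; have HW' := HW _ (aut_ext Hg).
    case: Hg => gE _ _ _.
    rewrite sub_capmx; apply/andP; split.
      rewrite -(g'_E g (capmxSr W (EE i))).
      exact: submx_trans (submxMr _ (capmxSl _ _)) HW'.
    exact: submx_trans (submxMr _ (capmxSr _ _)) gE.
- case=> /andP[WS SW] _ Hinv g Hg.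
  have cPg : comm_mx P g.
    apply: mx_ext => u; rewrite !mulmxA; case: Hg => _ _ _; apply; exact: submx1.
  have rfg : row_free g.
    case: Hg => _ rk _ _; move: rk; rewrite mul1mx mxrank1 => rk.
    by rewrite /row_free rk.
  have Hi i : ((W :&: EE i) *m g <= W :&: EE i)%MS.
    have := Hinv _ (mem_nth 0 (ltn_ord i)); rewrite gen_E; apply.
    case: Hg => _ _ gform gcomm; split.
    + exact: (comm_mx_stable_kermxpoly (qq i) cPg).
    + exact: mxrankMfree.
    + by move=> u v _ _; apply: gform; apply: submx1.
    + by move=> u _; apply: gcomm; apply: submx1.
  apply: submx_trans (submxMr g WS) _; rewrite sumsmxMr.
  by apply/sumsmx_subP => i _; apply: submx_trans (Hi i) (capmxSl _ _).
Qed.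

End Generic.

Lemma dec0 (K : fieldType) (B P : 'M[K]_0) qs : invariant_decomp_statement B P qs.
Proof.
move=> W.
have z (p q : nat) (A : 'M[K]_(p, 0)) (C : 'M[K]_(q, 0)) : (A <= C)%MS.
  by rewrite [A]thinmx0 sub0mx.
have r0 (p : nat) (A : 'M[K]_(p, 0)) : \rank A = 0%N.
  by apply/eqP; rewrite -leqn0 rank_leq_col.
split => [_|_].
- split; first by rewrite !z.
  + by rewrite r0 big1 // => q _; apply: r0.
  + by move=> q _ g _; apply: z.
- by move=> g _; apply: z.
Qed.

Lemma prod_dvd (K : fieldType) (qs t : seq {poly K}) : uniq qs -> all (mem qs) t ->
  \prod_(r <- t) r %| \prod_(q <- qs) q ^+ size t.
Proof.
move=> uq; elim: t => [|r t IH] /=; first by rewrite big_nil dvd1p.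
case/andP => rin /IH H; rewrite big_cons.
rewrite [X in _ %| X](eq_bigr (fun q => q * q ^+ size t)); last by move=> q _; rewrite exprS.
rewrite big_split /=; apply: dvdp_mul => //.
by rewrite (bigD1_seq r) //= dvdp_mulIl.
Qed.

Lemma full_of_dvd (K : fieldType) m (P : 'M[K]_m.+1) qs :
  char_poly P %| \prod_(q <- qs) q ^+ m.+1 -> horner_mx P (\prod_(q <- qs) q ^+ m.+1) = 0.
Proof. by move=> H; apply/mxminpoly_minP; apply: dvdp_trans (mxminpoly_dvd_char P) H. Qed.

Lemma full_complex (R : rcfType) m (P : 'M[R[i]]_m.+1) (qs : seq {poly R[i]}) : uniq qs ->
  (forall q, q \in qs <-> complex_eigpoly P q) ->
  char_poly P %| \prod_(q <- qs) q ^+ m.+1.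
Proof.
move=> uq Hq; have [s Hs] := closed_field_poly_normal (char_poly P).
rewrite (monicP (char_poly_monic P)) scale1r in Hs.
have sz : size s = m.+1.
  by have := size_char_poly P; rewrite Hs size_prod_XsubC => -[].
rewrite Hs -sz -(size_map (fun z => 'X - z%:P) s).
rewrite -(big_map (fun z => 'X - z%:P) xpredT (fun x => x)).
apply: prod_dvd => //; apply/allP => r /mapP [z zs ->].
by apply/Hq; exists z; split => //; rewrite eigenvalue_root_char Hs root_prod_XsubC.
Qed.

Lemma cop_complex (R : rcfType) m (P : 'M[R[i]]_m) (qs : seq {poly R[i]}) :
  (forall q, q \in qs <-> complex_eigpoly P q) ->
  forall p q, p \in qs -> q \in qs -> p != q -> coprimep p q.
Proof.
move=> Hq p q /Hq [a [_ ->]] /Hq [b [_ ->]] pq; apply: coprimep_XsubC2.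
by rewrite subr_eq0; apply: contraNneq pq => ->.
Qed.

Lemma theorem6_complex (R : realType) (n : nat) (B P : 'M[R[i]]_n) (qs : seq {poly R[i]}) :
      symplectic B -> self_adjoint B P ->
      uniq qs -> (forall q, q \in qs <-> complex_eigpoly P q) ->
      invariant_decomp_statement B P qs.
Proof.
case: n B P qs => [|m] B P qs _ sa uq Hq; first exact: dec0.
apply: generic => //.
- exact: cop_complex Hq.
- by apply: full_of_dvd; apply: full_complex.
- by rewrite pnatr_eq0.
Qed.

Section Real.
Variable R : rcfType.
Local Notation f := (real_complex R).
Definition quad (a b : R) : {poly R} := 'X^2 - (2 * a) *: 'X + (a ^+ 2 + b ^+ 2)%:P.

Lemma quad_noroot a b x : 0 < b -> ~~ root (quad a b) x.
Proof.
move=> b0; rewrite /root /quad !hornerE; apply/negP => /eqP H.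
have H2 : x ^+ 2 - 2 * a * x + a ^+ 2 + b ^+ 2 = 0 by exact: H.
have := sqr_ge0 (x - a); nra.
Qed.

Lemma map_quad a b : map_poly f (quad a b) =
  'X^2 - (f (2 * a)) *: 'X + (f (a ^+ 2 + b ^+ 2))%:P.
Proof.
by rewrite /quad rmorphD rmorphB /= map_polyXn map_polyZ map_polyX map_polyC.
Qed.

Lemma quad_cval a b c d : (map_poly f (quad a b)).[Complex c d] =
  Complex (c * c - d * d - 2 * a * c + (a ^+ 2 + b ^+ 2)) (c * d + d * c - 2 * a * d).
Proof.
rewrite map_quad !hornerE expr2 -!complexr0.
simpc; congr (Complex _ _); by rewrite addrA.
Qed.


Lemma quad_croot a b x : 0 < b -> root (map_poly f (quad a b)) x ->
  x = Complex a b \/ x = Complex a (- b).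
Proof.
move=> b0; case: x => c d; rewrite /root quad_cval eq_complex /=.
case/andP => /eqP e1 /eqP e2.
have hd : d * (c - a) = 0 by nra.
have ca : c = a.
  move/eqP: hd; rewrite mulf_eq0 => /orP [/eqP d0|]; last by rewrite subr_eq0 => /eqP.
  exfalso; subst d; have := sqr_ge0 (c - a); nra.
subst c; have : (d - b) * (d + b) = 0 by nra.
move/eqP; rewrite mulf_eq0 => /orP [/eqP h|/eqP h]; [left | right]; congr Complex; lra.
Qed.

Lemma quad_root_p a b : root (map_poly f (quad a b)) (Complex a b).
Proof.
rewrite /root quad_cval eq_complex /=; apply/andP; split; apply/eqP; ring.
Qed.

Lemma quad_root_m a b : root (map_poly f (quad a b)) (Complex a (- b)).
Proof.
rewrite /root quad_cval eq_complex /=; apply/andP; split; apply/eqP; ring.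
Qed.

End Real.

Lemma cop_real (R : rcfType) m (P : 'M[R]_m) (qs : seq {poly R}) :
  (forall q, q \in qs <-> real_eigpoly P q) ->
  forall p q, p \in qs -> q \in qs -> p != q -> coprimep p q.
Proof.
move=> Hq p q /Hq Hp /Hq Hq' pq.
case: Hp => [[a [_ Ep]] | [a [b [b0 [_ Ep]]]]];
  case: Hq' => [[c [_ Eq]] | [c [d [d0 [_ Eq]]]]]; subst p q.
- apply: coprimep_XsubC2; rewrite subr_eq0; apply: contraNneq pq => ->.
  by [].
- by rewrite coprimep_sym coprimep_XsubC; apply: (@quad_noroot R c d a d0).
- by rewrite coprimep_XsubC; apply: (@quad_noroot R a b c b0).
- rewrite -(coprimep_map (real_complex R)); apply: Pdiv.ClosedField.root_coprimep => x rx.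
  apply/negP => rx'.
  have [ex|ex] := quad_croot b0 rx; have [ex'|ex'] := quad_croot d0 rx';
    rewrite ex in ex'; case: ex' => e1 e2; subst.
  + by rewrite eqxx in pq.
  + lra.
  + lra.
  + have bd : b = d by lra.
    by subst; rewrite eqxx in pq.
Qed.

Lemma full_real (R : rcfType) m (P : 'M[R]_m.+1) (qs : seq {poly R}) : uniq qs ->
  (forall q, q \in qs <-> real_eigpoly P q) ->
  char_poly P %| \prod_(q <- qs) q ^+ m.+1.
Proof.
move=> uq Hq; rewrite -(dvdp_map (real_complex R)).
set c := map_poly _ (char_poly P).
have [s Hs] := closed_field_poly_normal c.
have lc : lead_coef c = 1.
  by rewrite lead_coef_map (monicP (char_poly_monic P)) rmorph1.
rewrite lc scale1r in Hs.
have sz : size s = m.+1.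
  have := size_char_poly P; rewrite -(size_map_poly (real_complex R)) -/c Hs.
  by rewrite size_prod_XsubC => -[].
pose qz (z : R[i]) := if complex.Im z == 0 then 'X - (complex.Re z)%:P else quad (complex.Re z) (complex.Im z).
have rootc z : z \in s -> root c z by move=> zs; rewrite Hs root_prod_XsubC.
have cc : map_poly conjc c = c.
  rewrite /c -map_poly_comp; apply: eq_map_poly => x /=; exact: conjc_real.
have rconj z : root c z -> root c (conjc z).
  by rewrite -complex_root_conj cc.
have qzin z : z \in s -> qz z \in qs.
  move=> zs; apply/Hq; move: (rootc z zs); rewrite /qz; case: z zs => a b zs /= rz.
  case: eqP => [b0|/eqP b0].
  - left; exists a; split => //; rewrite eigenvalue_root_char.
    by rewrite -(fmorph_root (real_complex R)) -/c; subst b.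
  - right; exists a, `|b|; split; first by rewrite normr_gt0.
    split; last by rewrite /quad real_normK ?num_real.
    have [hb|hb] := ltrP 0 b; first by rewrite gtr0_norm.
    by rewrite ler0_norm //; apply: (rconj _ rz).
have dz z : ('X - z%:P) %| map_poly (real_complex R) (qz z).
  rewrite dvdp_XsubCl /qz; case: z => a b /=; case: eqP => [->|_].
    by rewrite map_polyXsubC /= root_XsubC.
  exact: quad_root_p.
rewrite Hs.
apply: (@dvdp_trans _ (\prod_(z <- s) map_poly (real_complex R) (qz z))).
  apply: (big_ind2 (fun x y => x %| y)) => //.
  by move=> x1 x2 y1 y2; apply: dvdp_mul.
rewrite -rmorph_prod dvdp_map -sz -(size_map qz) -(big_map qz xpredT id).
by apply: prod_dvd => //; apply/allP => r /mapP [z zs ->]; apply: qzin.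
Qed.

Lemma theorem6_real (R : realType) (n : nat) (B P : 'M[R]_n) (qs : seq {poly R}) :
      symplectic B -> self_adjoint B P ->
      uniq qs -> (forall q, q \in qs <-> real_eigpoly P q) ->
      invariant_decomp_statement B P qs.
Proof.
case: n B P qs => [|m] B P qs _ sa uq Hq; first exact: dec0.
apply: generic => //.
- exact: cop_real Hq.
- by apply: full_of_dvd; apply: full_real.
- by rewrite pnatr_eq0.
Qed.

Theorem theorem6 :
  (* real case *)
  (forall (R : realType) (n : nat) (B P : 'M[R]_n) (qs : seq {poly R}),
      symplectic B -> self_adjoint B P ->
      uniq qs -> (forall q, q \in qs <-> real_eigpoly P q) ->
      invariant_decomp_statement B P qs) /\
  (* complex case *)
  (forall (R : realType) (n : nat) (B P : 'M[R[i]]_n) (qs : seq {poly R[i]}),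
      symplectic B -> self_adjoint B P ->
      uniq qs -> (forall q, q \in qs <-> complex_eigpoly P q) ->
      invariant_decomp_statement B P qs).
Proof.
split; [exact: theorem6_real | exact: theorem6_complex].
Qed.
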